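(* With the setting in the context, for all $t,t'\in\mathrm{hom}(C,G)^{-1}$ and $m,m'\in\mathrm{hom}(C,G)_1$: $A_tA_{t'}=A_{t+t'}=A_{t'}A_t$, $B_mB_{m'}=B_{m+m'}=B_{m'}B_m$, and $A_tB_m=B_mA_t$.
   Context: $(C_\bullet,\partial^C_\bullet)$ is a chain complex with each $C_n$ free abelian on a finite set $K_n$, $K_n\ne\emptyset$ for finitely many $n$; $(G_\bullet,\partial^G_\bullet)$ is a chain complex of finite abelian groups. $\mathrm{hom}(C,G)^p=\prod_n\mathrm{Hom}(C_n,G_{n-p})$ with $(\delta^pf)_n=f_{n-1}\partial^C_n-(-1)^p\partial^G_{n-p}f_n$. $\mathrm{hom}(C,G)_p=\mathrm{Hom}(\mathrm{hom}(C,G)^p,U(1))$ (written additively: the sum of characters is their pointwise product), $\chi_m(f)=m(f)$, $\delta_1m=m\circ\delta^0$. $\mathcal H=\bigotimes_n\bigotimes_{x\in K_n}\mathbb C[G_n]$ with orthonormal basis $|f\rangle$, $f\in\mathrm{hom}(C,G)^0$; $P_t|f\rangle=|f+t\rangle$, $Q_m|f\rangle=\chi_m(f)|f\rangle$; $A_t=P_{\delta^{-1}t}$ for $t\in\mathrm{hom}(C,G)^{-1}$ and $B_m=Q_{\delta_1m}$ for $m\in\mathrm{hom}(C,G)_1$. *)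

(* Defs.v *)
From HB Require Import structures.
From mathcomp Require Import all_boot all_order all_algebra.
Unset Printing Implicit Defensive.
Import Order.TTheory GRing.Theory Num.Theory.
Local Open Scope ring_scope.

Section Setting.
(* C_n = free abelian group on the finite set K n, n : int.
   The boundary d^C_n : C_n -> C_{n-1} is given by its integer matrix dC n,
   d^C_n x = \sum_y dC n x y * y. *)
Context (K : int -> finType) (dC : forall n : int, K n -> K (n - 1) -> int).
Context (G : int -> finZmodType) (dG : forall n : int, {additive G n -> G (n - 1)}).

Definition finitely_nonempty : Prop :=
  exists s : seq int, forall n, n \notin s -> #|K n| = 0%N.

Definition C_chain_complex : Prop :=
  forall (n : int) (x : K n) (z : K (n - 1 - 1)),
    \sum_(y : K (n - 1)) dC n x y * dC (n - 1) y z = 0.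

Definition G_chain_complex : Prop :=
  forall (n : int) (g : G n), dG (n - 1) (dG n g) = 0.

Definition castG (a b : int) (e : a = b) (g : G a) : G b :=
  eq_rect a (fun k => (G k : Type)) g b e.

(* hom(C,G)^p = prod_n Hom(C_n, G_{n-p}); a homomorphism out of the free
   abelian group C_n is the same as a function on its basis K n. *)
Definition cochain (p : int) := forall n : int, K n -> G (n - p).

Definition cadd p (f g : cochain p) : cochain p := fun n x => f n x + g n x.
Definition copp p (f : cochain p) : cochain p := fun n x => - f n x.

Lemma idx1 (n p : int) : n - 1 - p = n - (p + 1). Proof. by rewrite opprD addrA addrAC. Qed.
Lemma idx2 (n p : int) : n - p - 1 = n - (p + 1). Proof. by rewrite opprD addrA. Qed.

Definition delta (p : int) (f : cochain p) : cochain (p + 1) :=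
  fun n x =>
    castG _ _ (idx1 n p) (\sum_(y : K (n - 1)) f (n - 1) y *~ dC n x y)
    - castG _ _ (idx2 n p) (dG (n - p) (f n x)) *~ ((-1) ^ p).

End Setting.

Section Operators.
Context (K : int -> finType) (dC : forall n : int, K n -> K (n - 1) -> int).
Context (G : int -> finZmodType) (dG : forall n : int, {additive G n -> G (n - 1)}).
Context (Cx : numClosedFieldType).

Definition is_character p (m : cochain K G p -> Cx) : Prop :=
  (forall f g, m (cadd K G p f g) = m f * m g) /\ (forall f, `|m f| = 1).

Definition char_add p (m m' : cochain K G p -> Cx) : cochain K G p -> Cx :=
  fun f => m f * m' f.

(* H: vectors are coefficient functions on the orthonormal basis |f>,
   f in hom(C,G)^0 (a finite set) *)
Definition hilb := cochain K G 0 -> Cx.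

(* P_t |f> = |f + t>  i.e.  (P_t psi)(g) = psi(g - t) *)
Definition Pop (t : cochain K G 0) (psi : hilb) : hilb :=
  fun g => psi (cadd K G 0 g (copp K G 0 t)).
Definition Qop (m : cochain K G 0 -> Cx) (psi : hilb) : hilb :=
  fun f => m f * psi f.

Definition Aop (t : cochain K G (-1)) : hilb -> hilb := Pop (delta K dC G dG (-1) t).
Definition Bop (m : cochain K G 1 -> Cx) : hilb -> hilb :=
  Qop (fun f => m (delta K dC G dG 0 f)).

End Operators.

Arguments C_chain_complex {K} dC.
Arguments G_chain_complex {G} dG.
Arguments castG {G a b} e g.
Arguments cadd {K G p} f g.
Arguments copp {K G p} f.
Arguments delta {K} dC {G} dG {p} f.
Arguments is_character {K G Cx p} m.
Arguments char_add {K G Cx p} m m'.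
Arguments Pop {K G Cx} t psi.
Arguments Qop {K G Cx} m psi.
Arguments Aop {K} dC {G} dG Cx t psi.
Arguments Bop {K} dC {G} dG {Cx} m psi.

(* Main.v *)
Require Import Defs.
From HB Require Import structures.
From mathcomp Require Import all_boot all_order all_algebra.
From Stdlib Require Import FunctionalExtensionality.
Import Order.TTheory GRing.Theory Num.Theory.
Local Open Scope ring_scope.

Section H.
Variables (K : int -> finType) (dC : forall n : int, K n -> K (n - 1) -> int)
  (G : int -> finZmodType) (dG : forall n : int, {additive G n -> G (n - 1)}).

Lemma castG_id a (e : a = a) (g : G a) : castG e g = g.
Proof. by rewrite (eq_irrelevance e erefl). Qed.
Lemma castG_comp a b c (e1 : a = b) (e2 : b = c) (g : G a) :
  castG e2 (castG e1 g) = castG (etrans e1 e2) g.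
Proof. by case: c / e2; case: b / e1. Qed.
Lemma castG_irr a b (e1 e2 : a = b) (g : G a) : castG e1 g = castG e2 g.
Proof. by rewrite (eq_irrelevance e1 e2). Qed.
Lemma castGD a b (e : a = b) (x y : G a) : castG e (x + y) = castG e x + castG e y.
Proof. by case: b / e. Qed.
Lemma castGN a b (e : a = b) (x : G a) : castG e (- x) = - castG e x.
Proof. by case: b / e. Qed.
Lemma castG0 a b (e : a = b) : castG e (0 : G a) = 0.
Proof. by case: b / e. Qed.
Lemma castGz a b (e : a = b) (x : G a) z : castG e (x *~ z) = castG e x *~ z.
Proof. by case: b / e. Qed.
Lemma castG_sum a b (e : a = b) (I : finType) (F : I -> G a) :
  castG e (\sum_i F i) = \sum_i castG e (F i).
Proof. by case: b / e. Qed.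
Lemma castG_dG a b (e : a = b) (e' : a - 1 = b - 1) (g : G a) :
  castG e' (dG a g) = dG b (castG e g).
Proof. by case: b / e e'=> e'; rewrite !castG_id. Qed.
Lemma castG_dG' a b (e : a = b) (g : G a) :
  dG b (castG e g) = castG (f_equal (fun k => k - 1) e) (dG a g).
Proof. by rewrite (@castG_dG a b e). Qed.
Lemma castGB a b (e : a = b) (x y : G a) : castG e (x - y) = castG e x - castG e y.
Proof. by case: b / e. Qed.

Lemma cochain_ext p (f g : cochain K G p) : (forall n x, f n x = g n x) -> f = g.
Proof. move=> h; apply: functional_extensionality_dep => n; exact: functional_extensionality. Qed.

Lemma delta_add p (f g : cochain K G p) :
  delta dC dG (cadd f g) = cadd (delta dC dG f) (delta dC dG g).
Proof.
apply: cochain_ext => n x; rewrite /delta /cadd.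
under eq_bigr do rewrite mulrzDl.
rewrite big_split /= castGD (raddfD (dG _)) castGD mulrzDl.
set a := castG _ _; set b := castG _ _; set c := castG _ _; set d := castG _ _.
by rewrite [- (c *~ _ + _)]opprD addrACA.
Qed.

Lemma delta_opp p (f : cochain K G p) :
  delta dC dG (copp f) = copp (delta dC dG f).
Proof.
apply: cochain_ext => n x; rewrite /delta /copp.
under eq_bigr do rewrite mulNrz.
rewrite sumrN castGN (raddfN (dG _)) castGN mulNrz.
set a := castG _ _; set b := castG _ _.
by rewrite [RHS]opprD.
Qed.

Lemma delta_delta (hC : C_chain_complex dC) (hG : G_chain_complex dG)
  (t : cochain K G (-1)) n x :
  delta dC dG (p := 0) (delta dC dG t) n x = 0.
Proof.
rewrite /delta.
have -> : (-1) ^ (-1) = -1 :> int by [].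
have -> : (-1) ^ 0 = 1 :> int by [].
rewrite mulr1z !mulrN1z.
under eq_bigr do rewrite mulrzBl.
rewrite sumrB castGB.
have H1 : \sum_y castG (idx1 (n - 1) (-1))
           (\sum_y0 t (n - 1 - 1) y0 *~ dC (n - 1) y y0) *~ dC n x y = 0.
  under eq_bigr do rewrite -castGz.
  rewrite -castG_sum.
  under eq_bigr do rewrite mulrz_suml.
  rewrite exchange_big /=.
  under eq_bigr do (under eq_bigr do rewrite -mulrzA; rewrite -mulrz_sumr).
  rewrite (eq_bigr (fun _ => 0)) ?big1 ?castG0 // => z _.
  under eq_bigr do rewrite mulrC.
  by rewrite hC mulr0z.
rewrite H1 castG0 sub0r.
rewrite (raddfB (dG _)) castGB.
rewrite (raddfN (dG _)).
rewrite !castG_dG' hG castG0 (@oppr0 (G _)) castG0 (@subr0 (G _)).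
rewrite raddf_sum.
set S := (X in castG _ (castG _ X)).
have -> : S = \sum_y dG _ (t (n - 1) y) *~ dC n x y.
  by apply: eq_bigr => y _; rewrite raddfMz.
set S2 := (X in castG (idx1 n 0) X).
have -> : S2 = - castG (idx2 (n - 1) (-1)) (\sum_y dG _ (t (n - 1) y) *~ dC n x y).
  rewrite castG_sum -sumrN; apply: eq_bigr => y _.
  by rewrite castGz -mulrzA mulN1r mulrNz.
rewrite castGN castG_comp castG_comp (@opprK (G _)).
rewrite (castG_irr _ _ (etrans (idx2 (n - 1) (-1)) (idx1 n 0)) (etrans (f_equal (+%R^~ (-1)) (idx1 n (-1))) (idx2 n 0))).
exact: subrr.
Qed.
End H.
Lemma zL1 (V : zmodType) (u a b : V) : u + - a + - b = u + - (a + b).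
Proof. by rewrite opprD addrA. Qed.
Lemma zL2 (V : zmodType) (u a b : V) : u + - (a + b) = u + - b + - a.
Proof. by rewrite opprD addrA addrAC. Qed.

Theorem lemma4 (K : int -> finType) (dC : forall n : int, K n -> K (n - 1) -> int)
  (G : int -> finZmodType) (dG : forall n : int, {additive G n -> G (n - 1)})
  (Cx : numClosedFieldType)
  (hK : finitely_nonempty K) (hC : C_chain_complex dC) (hG : G_chain_complex dG)
  (t t' : cochain K G (-1)) (m m' : cochain K G 1 -> Cx)
  (hm : is_character m) (hm' : is_character m') :
  [/\ Aop dC dG Cx t \o Aop dC dG Cx t' = Aop dC dG Cx (cadd t t'),
      Aop dC dG Cx (cadd t t') = Aop dC dG Cx t' \o Aop dC dG Cx t,
      Bop dC dG m \o Bop dC dG m' = Bop dC dG (char_add m m'),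
      Bop dC dG (char_add m m') = Bop dC dG m' \o Bop dC dG m
    & Aop dC dG Cx t \o Bop dC dG m = Bop dC dG m \o Aop dC dG Cx t].
Proof.
split; apply: functional_extensionality => psi; apply: functional_extensionality => g;
  rewrite /Aop /Bop /Pop /Qop /char_add /=.
- rewrite delta_add; congr (psi _); apply: cochain_ext => n x; rewrite /cadd /copp.
  set a := delta _ _ t n x; set b := delta _ _ t' n x.
  exact: zL1.
- rewrite delta_add; congr (psi _); apply: cochain_ext => n x; rewrite /cadd /copp.
  set a := delta _ _ t n x; set b := delta _ _ t' n x.
  exact: zL2.
- by rewrite mulrA.
- by rewrite mulrA [m' _ * _]mulrC.
- congr (m _ * _); rewrite delta_add delta_opp.
  apply: cochain_ext => n x; rewrite /cadd /copp.
  by rewrite delta_delta // (@oppr0 (G _)) (@addr0 (G _)).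
Qed.
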